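(* Let $A_1,\dots,A_m\in\mathbb{S}^n$, $b\in\mathbb{R}^m$, $C\in\mathbb{S}^n$, and let Assumption 1 hold for some $p\ge n$. Then every second-order critical point $Y\in\mathcal{M}_p$ of (P) is globally optimal for (P), and $X=YY^\top$ is globally optimal for (SDP).
   Context: $\mathbb{S}^n$: real symmetric $n\times n$ matrices; $\langle U,V\rangle=\operatorname{tr}(U^\top V)$. $\mathcal{A}(X)_i=\langle A_i,X\rangle$, $\mathcal{A}^*(\nu)=\sum_i\nu_iA_i$. (SDP): minimize $\langle C,X\rangle$ over $\{X\in\mathbb{S}^n:\mathcal{A}(X)=b,\ X\succeq0\}$. $\mathcal{M}_p=\{Y\in\mathbb{R}^{n\times p}:\mathcal{A}(YY^\top)=b\}$; (P): minimize $\langle CY,Y\rangle$ over $\mathcal{M}_p$. Assumption 1 (for $p$ with $\mathcal{M}_p\ne\emptyset$): either (a) $A_1Y,\dots,A_mY$ are linearly independent for all $Y\in\mathcal{M}_p$, or (b) $\operatorname{span}\{A_1Y,\dots,A_mY\}$ has constant dimension on an open neighborhood of $\mathcal{M}_p$. For $Y\in\mathcal{M}_p$: $T_Y=\{\dot Y:\langle A_iY,\dot Y\rangle=0\ \forall i\}$; $G_{ij}=\langle A_iY,A_jY\rangle$, $\mu=G^\dagger\mathcal{A}(CYY^\top)$, $S(Y)=C-\mathcal{A}^*(\mu)$. $Y$ is second-order critical if $S(Y)Y=0$ and $\langle\dot Y,S(Y)\dot Y\rangle\ge0$ for all $\dot Y\in T_Y$. *)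

(* Defs.v *)
From HB Require Import structures.
From mathcomp Require Import all_boot all_order all_algebra.
From mathcomp Require Import all_classical all_reals all_analysis.
Set Implicit Arguments. Unset Strict Implicit. Unset Printing Implicit Defensive.
Import Order.TTheory GRing.Theory Num.Theory.
Import numFieldNormedType.Exports.
Local Open Scope ring_scope.
Local Open Scope classical_set_scope.

Section BM.
Variables (R : realType) (n m : nat).

Definition frob (q : nat) (U V : 'M[R]_(n, q)) : R := \tr (U^T *m V).

Definition symmx (X : 'M[R]_n) : Prop := X^T = X.
Definition psdmx (X : 'M[R]_n) : Prop :=
  symmx X /\ forall v : 'cV[R]_n, 0 <= (v^T *m X *m v) 0 0.

Definition Aop (A : 'I_m -> 'M[R]_n) (X : 'M[R]_n) : 'cV[R]_m :=
  \col_i frob (A i) X.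
Definition Aadj (A : 'I_m -> 'M[R]_n) (nu : 'cV[R]_m) : 'M[R]_n :=
  \sum_i nu i 0 *: A i.

Definition sdp_feasible (A : 'I_m -> 'M[R]_n) (b : 'cV[R]_m) (X : 'M[R]_n) :=
  symmx X /\ Aop A X = b /\ psdmx X.
Definition sdp_optimal A b (C : 'M[R]_n) (X : 'M[R]_n) :=
  sdp_feasible A b X /\
  forall X', sdp_feasible A b X' -> frob C X <= frob C X'.

Definition Mp (A : 'I_m -> 'M[R]_n) (b : 'cV[R]_m) (p : nat) : set 'M[R]_(n, p) :=
  [set Y | Aop A (Y *m Y^T) = b].
Definition P_optimal A b (C : 'M[R]_n) (p : nat) (Y : 'M[R]_(n, p)) :=
  @Mp A b p Y /\
  forall Y', @Mp A b p Y' -> frob (C *m Y) Y <= frob (C *m Y') Y'.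

Definition penrose (k : nat) (G Gd : 'M[R]_k) : Prop :=
  [/\ G *m Gd *m G = G, Gd *m G *m Gd = Gd,
      (G *m Gd)^T = G *m Gd & (Gd *m G)^T = Gd *m G].
Definition mp_pinv (k : nat) (G : 'M[R]_k) : 'M[R]_k :=
  match pselect (exists Gd, penrose G Gd) with
  | left h => projT1 (cid h)
  | right _ => 0
  end.

Definition gram (A : 'I_m -> 'M[R]_n) (p : nat) (Y : 'M[R]_(n, p)) : 'M[R]_m :=
  \matrix_(i, j) frob (A i *m Y) (A j *m Y).
Definition mu A (C : 'M[R]_n) (p : nat) (Y : 'M[R]_(n, p)) : 'cV[R]_m :=
  mp_pinv (gram A Y) *m Aop A (C *m Y *m Y^T).
Definition Smat A (C : 'M[R]_n) (p : nat) (Y : 'M[R]_(n, p)) : 'M[R]_n :=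
  C - Aadj A (mu A C Y).

Definition tangent (A : 'I_m -> 'M[R]_n) (p : nat) (Y : 'M[R]_(n, p)) :
  set 'M[R]_(n, p) := [set Yd | forall i, frob (A i *m Y) Yd = 0].

Definition second_order_critical A (C : 'M[R]_n) (p : nat) (Y : 'M[R]_(n, p)) :=
  Smat A C Y *m Y = 0 /\
  forall Yd, tangent A Y Yd -> 0 <= frob Yd (Smat A C Y *m Yd).

Definition span_dim (A : 'I_m -> 'M[R]_n) (p : nat) (Y : 'M[R]_(n, p)) : nat :=
  \rank (\matrix_(i < m) mxvec (A i *m Y)).

Definition assumption1 (A : 'I_m -> 'M[R]_n) (b : 'cV[R]_m) (p : nat) : Prop :=
  (forall Y, @Mp A b p Y ->
     forall nu : 'I_m -> R, \sum_i nu i *: (A i *m Y) = 0 -> forall i, nu i = 0)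
  \/
  (exists (U : set 'M[R]_(n, p)) (r : nat),
     open U /\ @Mp A b p `<=` U /\ forall Y, U Y -> span_dim A Y = r).

End BM.

Arguments Mp {R n m} A b p _.

(* Main.v *)
Require Import Defs.
From HB Require Import structures.
From mathcomp Require Import all_boot all_order all_algebra.
From mathcomp Require Import all_classical all_reals all_analysis.
From mathcomp Require Import ring lra.
Import Order.TTheory GRing.Theory Num.Theory.
Set Implicit Arguments. Unset Strict Implicit. Unset Printing Implicit Defensive.
Local Open Scope ring_scope.

Section Aux.
Variable R : realFieldType.

Lemma tr11 (M : 'M[R]_1) : \tr M = M 0 0.
Proof. by rewrite /mxtrace big_ord1. Qed.

Lemma mul11 (M N : 'M[R]_1) : (M *m N) 0 0 = M 0 0 * N 0 0.
Proof. by rewrite mxE big_ord1. Qed.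

Definition bf n (X : 'M[R]_n) (u v : 'cV[R]_n) := (u^T *m X *m v) 0 0.

Lemma bf_sym n (X : 'M[R]_n) u v : X^T = X -> bf X u v = bf X v u.
Proof.
move=> sX; rewrite /bf.
have -> : v^T *m X *m u = (u^T *m X *m v)^T by rewrite !trmx_mul trmxK sX mulmxA.
by rewrite [RHS]mxE.
Qed.

Lemma bf_delta n (X : 'M[R]_n) i j : bf X (delta_mx i 0) (delta_mx j 0) = X i j.
Proof. by rewrite /bf trmx_delta -rowE -colE !mxE. Qed.

Lemma e00D m1 m2 (A B : 'M[R]_(m1.+1, m2.+1)) : (A + B) 0 0 = A 0 0 + B 0 0.
Proof. by rewrite mxE. Qed.
Lemma e00Z m1 m2 a (A : 'M[R]_(m1.+1, m2.+1)) : (a *: A) 0 0 = a * A 0 0.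
Proof. by rewrite mxE. Qed.
Lemma e00B m1 m2 (A B : 'M[R]_(m1.+1, m2.+1)) : (A - B) 0 0 = A 0 0 - B 0 0.
Proof. by rewrite !mxE. Qed.

Lemma bf_expand n (X : 'M[R]_n) u v t :
  bf X (u + t *: v) (u + t *: v) = bf X u u + t * bf X u v + t * bf X v u + t ^+ 2 * bf X v v.
Proof.
rewrite /bf !(linearD, linearZ) /=; do 3! (rewrite ?(mulmxDl, mulmxDr) -?scalemxAl -?scalemxAr ?scalerA).
rewrite !(e00D, e00Z) expr2; ring.
Qed.

Lemma bfB n (X M : 'M[R]_n) a u : bf (X - a *: M) u u = bf X u u - a * bf M u u.
Proof. by rewrite /bf mulmxBr mulmxBl -scalemxAr -scalemxAl e00B e00Z. Qed.

Lemma bf_outer n (c w : 'cV[R]_n) : bf (c *m c^T) w w = (w^T *m c) 0 0 ^+ 2.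
Proof.
rewrite /bf !mulmxA -(mulmxA _ c^T) mul11 expr2; congr (_ * _).
have -> : c^T *m w = (w^T *m c)^T by rewrite trmx_mul trmxK.
by rewrite [LHS]mxE.
Qed.


Lemma tr_psd n (S : 'M[R]_n) : (forall v, 0 <= bf S v v) ->
  forall k, (k <= n)%N -> forall X : 'M[R]_n, X^T = X -> (forall v, 0 <= bf X v v) ->
   (forall i j : 'I_n, (k <= j)%N -> X i j = 0) -> 0 <= \tr (S *m X).
Proof.
move=> hS; elim=> [|k IH] kn X sX pX supp.
  have -> : X = 0 by apply/matrixP=> i j; rewrite mxE supp.
  by rewrite mulmx0 mxtrace0.
have ltk : (k < n)%N by [].
pose e := Ordinal ltk.
pose ev : 'cV[R]_n := delta_mx e 0.
have Xsym : forall i j, X j i = X i j.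
  by move=> i j; rewrite -[in LHS]sX mxE.
have d_ge0 : 0 <= X e e by rewrite -bf_delta.
have [d0|dn0] := eqVneq (X e e) 0.
  have col0 : forall i, X i e = 0.
    move=> i; apply/eqP; apply/negPn/negP => ai.
    pose t := - (X i i + 1) / (2 * X i e).
    have := pX (delta_mx i 0 + t *: ev).
    rewrite bf_expand !bf_delta d0 (Xsym i e).
    have -> : X i i + t * X i e + t * X i e + t ^+ 2 * 0 = -1.
      by rewrite /t; field; rewrite ?mulf_neq0 ?pnatr_eq0.
    by rewrite ler0N1.
  apply: IH => //; first by apply: ltnW.
  move=> i j kj; have [je|jne] := eqVneq j e; first by rewrite je col0.
  apply: supp; rewrite ltn_neqAle kj andbT; apply: contra_neq jne => kj'.
  by apply: val_inj => /=; rewrite -kj'.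
have dpos : 0 < X e e by rewrite lt_def dn0.
set d := X e e in d_ge0 dn0 dpos.
pose c := col e X.
pose X' := X - d^-1 *: (c *m c^T).
have X'E : forall i j, X' i j = X i j - d^-1 * (X i e * X j e).
  by move=> i j; rewrite !mxE big_ord1 !mxE.
have trX' : \tr (S *m X') = \tr (S *m X) - d^-1 * bf S c c.
  rewrite /X' mulmxBr -scalemxAr linearB linearZ /=; congr (_ - _ * _).
  by rewrite mulmxA mxtrace_mulC tr11 /bf mulmxA.
have : 0 <= \tr (S *m X').
  apply: IH; first by apply: ltnW.
  - by rewrite /X' linearB linearZ /= trmx_mul trmxK sX.
  - move=> w; rewrite /X' bfB bf_outer.
    set s := (w^T *m c) 0 0.
    have hs : bf X w ev = s by rewrite /bf -mulmxA -colE.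
    have := pX (w + (- s / d) *: ev).
    rewrite bf_expand.
    have -> : bf X ev w = bf X w ev by apply: bf_sym.
    rewrite hs bf_delta -/d.
    have -> : bf X w w + - s / d * s + - s / d * s + (- s / d) ^+ 2 * d
         = bf X w w - d^-1 * s ^+ 2 by field.
    by [].
  - move=> i j kj; rewrite X'E.
    have [je|jne] := eqVneq j e; first by rewrite je -/d; field.
    have kj' : (k.+1 <= j)%N.
      rewrite ltn_neqAle kj andbT; apply: contra_neq jne => kj'.
      by apply: val_inj => /=; rewrite -kj'.
    by rewrite (supp i j kj') -(Xsym j e) (supp e j kj') mulr0 mulr0 subr0.
rewrite trX' => h.
have : 0 <= d^-1 * bf S c c by rewrite mulr_ge0 ?invr_ge0.
move: h; set a := \tr (S *m X); set b := d^-1 * bf S c c => h1 h2.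
by have := addr_ge0 h1 h2; rewrite subrK.
Qed.


Lemma bf_tr n (X : 'M[R]_n) u : bf X^T u u = bf X u u.
Proof.
rewrite /bf; have -> : u^T *m X^T *m u = (u^T *m X *m u)^T by rewrite !trmx_mul trmxK mulmxA.
by rewrite [LHS]mxE.
Qed.

Lemma sqnorm_ge0 q (x : 'cV[R]_q) : 0 <= (x^T *m x) 0 0.
Proof. rewrite mxE; apply: sumr_ge0 => i _; rewrite mxE -expr2; exact: sqr_ge0. Qed.

End Aux.

Lemma frob_P (R : realType) n p (C : 'M[R]_n) (Y : 'M[R]_(n, p)) : frob (C *m Y) Y = frob C (Y *m Y^T).
Proof. by rewrite /frob trmx_mul mulmxA [RHS]mxtrace_mulC mulmxA. Qed.


Theorem corollary2 (R : realType) (n m p : nat)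
  (A : 'I_m -> 'M[R]_n) (b : 'cV[R]_m) (C : 'M[R]_n) :
  (forall i, symmx (A i)) -> symmx C ->
  (n <= p)%N -> assumption1 A b p ->
  forall Y : 'M[R]_(n, p),
    Mp A b p Y -> second_order_critical A C Y ->
    P_optimal A b C Y /\ sdp_optimal A b C (Y *m Y^T).
Proof.
move=> sA sC np _ Y MY [SY0 Stan].
set nu := mu A C Y.
have SE : Smat A C Y = C - Aadj A nu by [].
move: SY0 Stan; set S := Smat A C Y => SY0 Stan.
have Spsd : forall u : 'cV[R]_n, 0 <= bf S u u.
  move=> u.
  have [rn|rlt] := eqVneq (\rank Y) n.
    have : row_free Y by rewrite /row_free rn.
    move/mulmx_free_eq0 => h; move: SY0; move/eqP; rewrite h => /eqP ->.
    by rewrite /bf mulmx0 mul0mx mxE.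
  have rp : (\rank Y < p)%N.
    by apply: leq_trans np; rewrite ltn_neqAle rlt rank_leq_row.
  have kpos : kermx Y^T != 0.
    by rewrite -mxrank_eq0 mxrank_ker mxrank_tr subn_eq0 -ltnNge.
  have [i wi] : exists i, row i (kermx Y^T) != 0.
    apply/existsP; apply: contraNT kpos => /existsPn h.
    by apply/eqP/row_matrixP => i; rewrite row0; apply/eqP/negPn/h.
  set w := row i (kermx Y^T) in wi.
  have hw : w *m Y^T = 0 by rewrite -row_mul mulmx_ker row0.
  have tan : tangent A Y (u *m w).
    move=> j; rewrite /frob mulmxA mxtrace_mulC trmx_mul !mulmxA hw !mul0mx.
    exact: mxtrace0.
  have := Stan _ tan.
  have -> : frob (u *m w) (S *m (u *m w)) = (w *m w^T) 0 0 * bf S u u.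
    rewrite /frob trmx_mul !mulmxA mxtrace_mulC tr11 !mulmxA.
    have -> : w *m w^T *m u^T *m S *m u = (w *m w^T) *m (u^T *m S *m u) by rewrite !mulmxA.
    by rewrite mul11.
  have wpos : 0 < (w *m w^T) 0 0.
    rewrite lt_def; apply/andP; split; last by have := sqnorm_ge0 w^T; rewrite trmxK.
    have nn : forall k : 'I_p, true -> 0 <= w 0 k * w^T k 0.
      by move=> k _; rewrite [w^T _ _]mxE -expr2 sqr_ge0.
    apply/eqP => /eqP; rewrite mxE => /eqP /(psumr_eq0P nn) h.
    move: wi => /eqP; apply; apply/rowP => j; rewrite [RHS]mxE.
    have := h j isT; rewrite [w^T _ _]mxE => /eqP; rewrite mulf_eq0 orbb => /eqP hj.
    exact: hj.
  by rewrite pmulr_rge0.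
have key : forall X, frob C X = \tr (S^T *m X) + \sum_i nu i 0 * frob (A i) X.
  move=> X; rewrite /S SE /Aadj /frob.
  rewrite (raddfB (@trmx _ n n)) mulmxBl (raddfB (@mxtrace _ n)).
  rewrite (raddf_sum (@trmx _ n n)) mulmx_suml (raddf_sum (@mxtrace _ n)).
  have -> : \sum_i \tr ((nu i 0 *: A i)^T *m X) = \sum_i nu i 0 * \tr ((A i)^T *m X).
    apply: eq_bigr => i _; have -> : (nu i 0 *: A i)^T = nu i 0 *: (A i)^T by apply/matrixP=> k l; rewrite !mxE.
    by rewrite -scalemxAl mxtraceZ.
  by rewrite subrK.
have trpsd : forall X : 'M[R]_n, psdmx X -> 0 <= \tr (S^T *m X).
  move=> X [sX pX]; apply: (@tr_psd _ n _ _ n) => //.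
  - by move=> v; rewrite bf_tr.
  - by move=> i j; rewrite leqNgt ltn_ord.
have feasY : forall Z : 'M[R]_(n, p), Mp A b p Z -> sdp_feasible A b (Z *m Z^T).
  move=> Z MZ; split; first by rewrite /symmx trmx_mul trmxK.
  split; first exact: MZ.
  split; first by rewrite /symmx trmx_mul trmxK.
  move=> v; rewrite -!mulmxA mulmxA.
  have -> : v^T *m Z = (Z^T *m v)^T by rewrite trmx_mul trmxK.
  exact: sqnorm_ge0.
have feasE : forall X, sdp_feasible A b X -> \sum_i nu i 0 * frob (A i) X = \sum_i nu i 0 * b i 0.
  move=> X [_ [hX _]]; apply: eq_bigr => i _; congr (_ * _).
  by rewrite -hX mxE.
have valY : frob C (Y *m Y^T) = \sum_i nu i 0 * b i 0.
  rewrite key feasE; last exact: feasY.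
  have -> : \tr (S^T *m (Y *m Y^T)) = 0.
    rewrite -mxtrace_tr !trmx_mul !trmxK -mulmxA mxtrace_mulC -mulmxA SY0 mulmx0.
    exact: mxtrace0.
  by rewrite add0r.
have sdpopt : sdp_optimal A b C (Y *m Y^T).
  split; first exact: feasY.
  move=> X' fX'; rewrite valY key feasE //.
  by rewrite lerDr; apply: trpsd; case: fX' => _ [].
split=> //; split=> // Y' MY'.
rewrite !frob_P; case: sdpopt => _; apply; exact: feasY.
Qed.
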